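(* Let $(x_1,\dots,x_{r+1})$ be a nonbacktracking walk in an undirected graph without loops. Then for every repeating edge block, with first node at position $a$: (i) $x_a=x_j$ for some $j<a$ (equivalently, in the notation of Lemma 4, the list $\mathbf R_2$ of repeating edge blocks whose first-node vertex has not appeared earlier in the walk is empty); and (ii) either $x_a=x_1$ or $x_a=x_j$ for some position $j$ in the new edge interior.
   Context: A walk of length $r$ is a sequence $(x_1,\dots,x_{r+1})$ of vertices with each $\{x_i,x_{i+1}\}$ an edge; it is nonbacktracking if $x_i\neq x_{i+2}$ for all $i\in\{1,\dots,r-1\}$. The $i$-th edge $\{x_i,x_{i+1}\}$ is a new edge if it differs from $\{x_j,x_{j+1}\}$ for all $j<i$, and a repeating edge otherwise. A repeating edge block is a maximal run of consecutive repeating edges, say edges $a,\dots,b-1$ ($a<b$); its first node is position $a$ and its last node is position $b$. The new edge interior is the list of positions $m$ with $2\le m\le r$ such that both the $(m-1)$-th and $m$-th edges are new. *)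

(* Defs.v *)
From mathcomp Require Import all_boot.
Set Implicit Arguments. Unset Strict Implicit. Unset Printing Implicit Defensive.

(* A walk of length r is x 1, ..., x (r+1) (1-indexed; values of x outside
   1..r+1 are irrelevant). The graph is a relation e on an eqType T. *)

Definition undirected_loopless (T : eqType) (e : rel T) : Prop :=
  symmetric e /\ irreflexive e.

Definition is_walk (T : eqType) (e : rel T) (x : nat -> T) (r : nat) : Prop :=
  forall i, 1 <= i <= r -> e (x i) (x i.+1).

Definition nonbacktracking (T : eqType) (x : nat -> T) (r : nat) : Prop :=
  forall i, 1 <= i <= r - 1 -> x i != x i.+2.

Definition same_edge (T : eqType) (x : nat -> T) (i j : nat) : bool :=
  ((x i == x j) && (x i.+1 == x j.+1)) || ((x i == x j.+1) && (x i.+1 == x j)).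

Definition new_edge (T : eqType) (x : nat -> T) (i : nat) : Prop :=
  forall j, 1 <= j < i -> ~~ same_edge x i j.

Definition repeating_edge (T : eqType) (x : nat -> T) (i : nat) : Prop :=
  ~ new_edge x i.

(* edges a, ..., b-1 form a repeating edge block (maximal run of repeating
   edges) in a walk of length r; its first node is position a and its
   last node is position b *)
Definition repeating_edge_block (T : eqType) (x : nat -> T) (r a b : nat) : Prop :=
  [/\ 1 <= a < b, b <= r.+1,
      (forall i, a <= i < b -> repeating_edge x i),
      (a = 1 \/ new_edge x a.-1) &
      (b = r.+1 \/ new_edge x b)].

Definition in_new_edge_interior (T : eqType) (x : nat -> T) (r m : nat) : Prop :=
  [/\ 2 <= m <= r, new_edge x m.-1 & new_edge x m].

(* Main.v *)
Require Import Defs.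
From mathcomp Require Import all_boot.
From mathcomp Require Import zify.

Section S.
Variables (T : eqType) (e : rel T) (x : nat -> T) (r : nat).
Hypotheses (He : undirected_loopless e) (Hw : is_walk e x r) (Hn : nonbacktracking x r).

Lemma new_p p : 1 <= p <= r -> (forall k, 1 <= k < p -> x k != x p) -> new_edge x p.
Proof.
move=> Hp Hmin q Hq; rewrite /same_edge; apply/negP => /orP [/andP [/eqP E1 /eqP E2]|/andP [/eqP E1 /eqP E2]].
  by move: (Hmin q Hq); rewrite E1 eqxx.
have [Hlt|Heq] : q.+1 < p \/ q.+1 = p by lia.
  by move: (Hmin q.+1 ltac:(lia)); rewrite E1 eqxx.
subst p; move: (Hn q ltac:(lia)); by rewrite E2 eqxx.
Qed.

Lemma new_pm1 p : 2 <= p <= r.+1 -> (forall k, 1 <= k < p -> x k != x p) -> new_edge x p.-1.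
Proof.
move=> Hp Hmin q Hq; rewrite /same_edge.
have -> : p.-1.+1 = p by lia.
apply/negP => /orP [/andP [/eqP E1 /eqP E2]|/andP [/eqP E1 /eqP E2]].
  by move: (Hmin q.+1 ltac:(lia)); rewrite E2 eqxx.
by move: (Hmin q ltac:(lia)); rewrite -E2 eqxx.
Qed.
End S.

Theorem lemma5 (T : eqType) (e : rel T) (x : nat -> T) (r : nat) :
  undirected_loopless e -> is_walk e x r -> nonbacktracking x r ->
  forall a b, repeating_edge_block x r a b ->
    (exists2 j, 1 <= j < a & x a = x j) /\
    (x a = x 1 \/ exists2 j, in_new_edge_interior x r j & x a = x j).
Proof.
move=> He Hw Hn a b [Hab Hbr Hrep _ _].
have Hex : exists p, (0 < p) && (x p == x a) by exists a; rewrite eqxx andbT; lia.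
case: (ex_minnP Hex) => p /andP [Hp0 /eqP Hpa] Hmin.
have Hpa' : p <= a by apply: Hmin; rewrite eqxx andbT; lia.
have Hmin' : forall k, 1 <= k < p -> x k != x p.
  move=> k Hk; apply/negP => /eqP E.
  have := Hmin k; rewrite E Hpa eqxx andbT => /(_ ltac:(lia)); lia.
have Hnew : new_edge x p by apply: (@new_p _ x r Hn p); [lia | exact: Hmin'].
have Hlt : p < a.
  case: (ltngtP p a) => // E; [lia|].
  by subst p; case: (Hrep a ltac:(lia)).
split; first by exists p => //; lia.
case: (p =P 1) => [E|Ne]; first by left; rewrite -Hpa E.
right; exists p => //.
split => //; first lia.
apply: (@new_pm1 _ x r p); [lia | exact: Hmin'].
Qed.
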